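(* Let $A_{-1},A_0,A_1$ be nonnegative square matrices of finite dimension such that the block tridiagonal matrix $Q$ (with $A_0$ on the diagonal, $A_1$ on the superdiagonal, $A_{-1}$ on the subdiagonal, on the half-line) is irreducible and $\inf_{\theta\in\mathbb{R}}\mathrm{spr}(A_*(e^\theta))\le1$, where $A_*(z)=z^{-1}A_{-1}+A_0+zA_1$. Let $\underline\theta\le\bar\theta$ be the two real solutions of $\mathrm{spr}(A_*(e^\theta))=1$. Let $G$ be the minimal nonnegative solution of $G=A_{-1}+A_0G+A_1G^2$ and $G^r$ the minimal nonnegative solution of $G^r=A_1+A_0G^r+A_{-1}(G^r)^2$. Let $\boldsymbol{v}$ be a (nonnegative) right eigenvector of $G$ for the eigenvalue $e^{\underline\theta}$ and $\boldsymbol{v}^r$ a (nonnegative) right eigenvector of $G^r$ for the eigenvalue $e^{-\bar\theta}$. If $\underline\theta=\bar\theta$, then $\boldsymbol{v}=\boldsymbol{v}^r$ up to multiplication by a positive constant.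
   Context: It is known in this setting that $\mathrm{spr}(G)=e^{\underline\theta}$, $\mathrm{spr}(G^r)=e^{-\bar\theta}$, and $I-A_*(z)=(I-zR)(I-H)(I-z^{-1}G)$ with $R$ the minimal nonnegative solution of $R=R^2A_{-1}+RA_0+A_1$ and $H=A_0+A_1G$; also $A_*(e^{\theta})$ is irreducible. *)

(* Defs.v *)
From HB Require Import structures.
From mathcomp Require Import all_boot all_order all_algebra.
From mathcomp Require Import all_classical all_reals.
From mathcomp.analysis Require Import sequences exp.
From mathcomp Require Import complex.
From Stdlib Require Import Relations.Relation_Operators.
Set Implicit Arguments. Unset Strict Implicit. Unset Printing Implicit Defensive.
Import Order.TTheory GRing.Theory Num.Theory.
Local Open Scope ring_scope.
Local Open Scope classical_set_scope.

Definition spr (R : realType) (n : nat) (A : 'M[R]_n) : R :=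
  sup [set ComplexField.Normc.normc z | z in
       [set z : R[i] | root (map_poly (real_complex R) (char_poly A)) z]].

Definition nonneg_mx (R : realType) (m n : nat) (A : 'M[R]_(m, n)) : Prop :=
  forall i j, 0 <= A i j.
Definition le_mx (R : realType) (m n : nat) (A B : 'M[R]_(m, n)) : Prop :=
  forall i j, A i j <= B i j.

Definition Astar (R : realType) (n : nat) (Am1 A0 A1 : 'M[R]_n) (z : R)
  : 'M[R]_n := z^-1 *: Am1 + A0 + z *: A1.

(* The half-line block tridiagonal (infinite) matrix Q, indexed by
   (level, phase) in nat * 'I_n: A_0 on the diagonal, A_1 on the
   superdiagonal, A_{-1} on the subdiagonal. *)
Definition Qentry (R : realType) (n : nat) (Am1 A0 A1 : 'M[R]_n)
  (x y : nat * 'I_n) : R :=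
  if y.1 == x.1 then A0 x.2 y.2
  else if y.1 == x.1.+1 then A1 x.2 y.2
  else if y.1.+1 == x.1 then Am1 x.2 y.2
  else 0.

Definition irreducible_Q (R : realType) (n : nat) (Am1 A0 A1 : 'M[R]_n) : Prop :=
  forall x y : nat * 'I_n,
    clos_trans _ (fun u v => 0 < Qentry Am1 A0 A1 u v) x y.

Definition minimal_nonneg_sol (R : realType) (n : nat) (B0 B1 B2 G : 'M[R]_n)
  : Prop :=
  nonneg_mx G /\ G = B0 + B1 *m G + B2 *m (G *m G) /\
  (forall X : 'M[R]_n, nonneg_mx X -> X = B0 + B1 *m X + B2 *m (X *m X) ->
     le_mx G X).

(* Main.v *)
Require Import Defs.
From HB Require Import structures.
From mathcomp Require Import all_boot all_order all_algebra.
From mathcomp Require Import all_classical all_reals.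
From mathcomp.analysis Require Import sequences exp.
From mathcomp Require Import complex.
From Stdlib Require Import Relations.Relation_Operators.
Import Order.TTheory GRing.Theory Num.Theory.
Local Open Scope ring_scope.

Lemma zero_closed (R : realType) (n : nat) (Am1 A0 A1 : 'M[R]_n) (z : R)
  (d : 'cV[R]_n) :
  nonneg_mx Am1 -> nonneg_mx A0 -> nonneg_mx A1 -> 0 < z ->
  irreducible_Q Am1 A0 A1 -> nonneg_mx d ->
  Astar Am1 A0 A1 z *m d = d -> forall k, d k 0 = 0 -> d = 0.
Proof.
move=> h1 h0 h2 zp irr dn Md k dk.
have Mge0 : forall i j, 0 <= Astar Am1 A0 A1 z i j.
  move=> i j; rewrite !mxE; apply: addr_ge0; first apply: addr_ge0 => //.
    by apply: mulr_ge0 => //; rewrite invr_ge0 ltW.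
  by apply: mulr_ge0 => //; rewrite ltW.
have step : forall i j, 0 < Astar Am1 A0 A1 z i j -> d i 0 = 0 -> d j 0 = 0.
  move=> i j Mp di.
  have : \sum_l Astar Am1 A0 A1 z i l * d l 0 = 0.
    by have := congr1 (fun A : 'cV[R]_n => A i 0) Md; rewrite mxE di.
  move/psumr_eq0P => H.
  have /eqP := H (fun l _ => mulr_ge0 (Mge0 i l) (dn l 0)) j isT.
  by rewrite mulf_eq0 (gt_eqF Mp) /= => /eqP.
have qstep : forall x y : nat * 'I_n, 0 < Qentry Am1 A0 A1 x y ->
    0 < Astar Am1 A0 A1 z x.2 y.2.
  move=> x y; rewrite /Qentry => Q.
  have e0 : 0 <= z^-1 * Am1 x.2 y.2 by apply: mulr_ge0 => //; rewrite invr_ge0 ltW.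
  have e2 : 0 <= z * A1 x.2 y.2 by apply: mulr_ge0 => //; rewrite ltW.
  rewrite !mxE.
  move: Q; case: ifP => _ Q.
    by apply: ltr_wpDr => //; apply: ltr_wpDl.
  move: Q; case: ifP => _ Q.
    by apply: ltr_wpDl; [apply: addr_ge0 | apply: mulr_gt0].
  move: Q; case: ifP => _ Q; last by rewrite ltxx in Q.
  apply: ltr_wpDr => //; apply: ltr_wpDr => //.
  by apply: mulr_gt0 => //; rewrite invr_gt0.
have path : forall x y, clos_trans _ (fun u v => 0 < Qentry Am1 A0 A1 u v) x y ->
    d x.2 0 = 0 -> d y.2 0 = 0.
  move=> x y; elim => [u v /qstep /step //| u v w _ IH1 _ IH2 du].
  exact: IH2 (IH1 du).
apply/matrixP => j c; rewrite (ord1 c) mxE.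
exact: (path (0%N, k) (0%N, j) (irr _ _) dk).
Qed.

Theorem lemma3p5 (R : realType) (n : nat) (Am1 A0 A1 : 'M[R]_n)
  (thl thu : R) (G Gr : 'M[R]_n) (v vr : 'cV[R]_n) :
  nonneg_mx Am1 -> nonneg_mx A0 -> nonneg_mx A1 ->
  irreducible_Q Am1 A0 A1 ->
  (* inf_theta spr(A_*(e^theta)) <= 1 *)
  (forall eps : R, 0 < eps ->
     exists th : R, spr (Astar Am1 A0 A1 (expR th)) < 1 + eps) ->
  (* thl <= thu are the two real solutions of spr(A_*(e^theta)) = 1 *)
  thl <= thu ->
  spr (Astar Am1 A0 A1 (expR thl)) = 1 ->
  spr (Astar Am1 A0 A1 (expR thu)) = 1 ->
  (forall th : R, spr (Astar Am1 A0 A1 (expR th)) = 1 -> th = thl \/ th = thu) ->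
  minimal_nonneg_sol Am1 A0 A1 G ->
  minimal_nonneg_sol A1 A0 Am1 Gr ->
  nonneg_mx v -> v != 0 -> G *m v = expR thl *: v ->
  nonneg_mx vr -> vr != 0 -> Gr *m vr = expR (- thu) *: vr ->
  thl = thu ->
  exists c : R, 0 < c /\ v = c *: vr.
Proof.
move=> h1 h0 h2 irr _ _ _ _ _ [_ [GE _]] [_ [GrE _]] vn vnz Gv vrn vrnz Gvr eth.
subst thu.
set z := expR thl.
have zp : 0 < z by apply: expR_gt0.
have zn0 : z != 0 by rewrite gt_eqF.
rewrite expRN -/z in Gvr.
set M := Astar Am1 A0 A1 z.
have Mv : M *m v = v.
  have E : z *: v = Am1 *m v + z *: (A0 *m v) + (z * z) *: (A1 *m v).
    rewrite -Gv {1}GE !mulmxDl -!mulmxA Gv -!scalemxAr. rewrite Gv -scalemxAr scalerA.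
    by [].
  apply: (@scalerI _ _ z) => //.
  rewrite E /M /Astar !mulmxDl -!scalemxAl !scalerDr !scalerA mulfV //.
  by rewrite scale1r.
have Mvr : M *m vr = vr.
  have E : z^-1 *: vr = A1 *m vr + z^-1 *: (A0 *m vr) + (z^-1 * z^-1) *: (Am1 *m vr).
    rewrite -Gvr {1}GrE !mulmxDl -!mulmxA Gvr -!scalemxAr Gvr -scalemxAr scalerA.
    by [].
  apply: (@scalerI _ _ z^-1); first by rewrite invr_eq0.
  rewrite E /M /Astar !mulmxDl -!scalemxAl !scalerDr !scalerA mulVf //.
  by rewrite scale1r addrC (addrC (_ *: (Am1 *m vr))) addrA.
have pos : forall u : 'cV[R]_n, nonneg_mx u -> u != 0 -> M *m u = u ->
    forall i, 0 < u i 0.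
  move=> u un unz Mu i; rewrite lt_def un andbT; apply/negP => /eqP ui.
  by move: unz; rewrite (@zero_closed _ _ _ _ _ _ _ h1 h0 h2 zp irr un Mu _ ui) eqxx.
have vp := pos v vn vnz Mv.
have vrp := pos vr vrn vrnz Mvr.
case: (pickP (fun i : 'I_n => true)) => [i0 _ | none]; last first.
  have v0 : v = 0.
    by apply/matrixP => i j; have := none i.
  by rewrite v0 eqxx in vnz.
set F := fun i : 'I_n => v i 0 / vr i 0.
case: (@arg_minP _ _ _ i0 xpredT F isT) => k _ Hk.
set c := F k.
have cp : 0 < c by rewrite /c /F divr_gt0.
exists c; split => //.
set d := v - c *: vr.
have dn : nonneg_mx d.
  move=> i j; rewrite (ord1 j) !mxE subr_ge0.
  have := Hk i isT; rewrite /F -/c ler_pdivlMr // => H.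
have Md : M *m d = d.
  rewrite /d mulmxBr Mv -scalemxAr Mvr.
  reflexivity.
have dk : d k 0 = 0.
  by rewrite /d !mxE /c /F divfK ?subrr // gt_eqF.
have := @zero_closed _ _ _ _ _ _ _ h1 h0 h2 zp irr dn Md _ dk.
by move/eqP; rewrite subr_eq0 => /eqP.
Qed.
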